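(* Let $N\in\mathbb{N}$; for $i=1,\ldots,N$ let $(\mathcal{X}_i,d_{\mathcal{X}_i})$ be a compact metric space and $\mu_i$ a Borel probability measure on $\mathcal{X}_i$; let $\boldsymbol{\mathcal{X}}:=\mathcal{X}_1\times\cdots\times\mathcal{X}_N$ with metric $\sum_id_{\mathcal{X}_i}$, and let $f:\boldsymbol{\mathcal{X}}\to\mathbb{R}$ be $L_f$-Lipschitz ($L_f>0$). Let finite collections $\mathcal{G}_i=\{g_{i,1},\ldots,g_{i,m_i}\}$ be given such that (BSS-a) or (BSS-b) holds; let $m:=\sum_im_i$, $\boldsymbol{g}(\boldsymbol{x})$ the vector of $g_{i,j}(x_i)$ and $\bar{\boldsymbol{g}}$ the vector of $\int g_{i,j}\,\mathrm{d}\mu_i$ (same order). Let $\boldsymbol{\mathcal{X}}^{\dagger(0)}\subseteq\boldsymbol{\mathcal{X}}$ be a finite set such that the linear program $\max\{y_0+\langle\bar{\boldsymbol{g}},\boldsymbol{y}\rangle:y_0+\langle\boldsymbol{g}(\boldsymbol{x}),\boldsymbol{y}\rangle\le f(\boldsymbol{x})\ \forall\boldsymbol{x}\in\boldsymbol{\mathcal{X}}^{\dagger(0)}\}$ has bounded superlevel sets, let $\mathtt{Oracle}$ be a global minimization oracle, and let $\epsilon_{\mathsf{LSIP}}>0$. Run Algorithm 1 with these inputs. Then: (i) Algorithm 1 terminates after finitely many iterations. (ii) $\alpha^{\mathsf{LB}}_{\mathsf{relax}}\le\text{(LSIP)}\le\alpha^{\mathsf{UB}}_{\mathsf{relax}}$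 and $\alpha^{\mathsf{UB}}_{\mathsf{relax}}-\alpha^{\mathsf{LB}}_{\mathsf{relax}}\le\epsilon_{\mathsf{LSIP}}$, where (LSIP) denotes the optimal value of $\max\{y_0+\langle\bar{\boldsymbol{g}},\boldsymbol{y}\rangle:y_0+\langle\boldsymbol{g}(\boldsymbol{x}),\boldsymbol{y}\rangle\le f(\boldsymbol{x})\ \forall\boldsymbol{x}\in\boldsymbol{\mathcal{X}}\}$. (iii) $(\hat y_0,\hat{\boldsymbol{y}})$ is an $\epsilon_{\mathsf{LSIP}}$-optimal solution of (LSIP) and $\hat y_0+\langle\bar{\boldsymbol{g}},\hat{\boldsymbol{y}}\rangle=\alpha^{\mathsf{LB}}_{\mathsf{relax}}$. (iv) $\hat{\mu}$ is an $\epsilon_{\mathsf{LSIP}}$-optimal solution of $\inf_{\mu\in\Gamma([\mu_1]_{\mathcal{G}_1},\ldots,[\mu_N]_{\mathcal{G}_N})}\int_{\boldsymbol{\mathcal{X}}}f\,\mathrm{d}\mu$ and $\int_{\boldsymbol{\mathcal{X}}}f\,\mathrm{d}\hat{\mu}=\alpha^{\mathsf{UB}}_{\mathsf{relax}}$.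
   Context: Conditions (with $\boldsymbol{g}_i(x_i):=(g_{i,1}(x_i),\ldots,g_{i,m_i}(x_i))^\top$): (BSS-a) for each $i$, $\operatorname{supp}(\mu_i)=\mathcal{X}_i$, each $g_{i,j}$ is continuous, and there exist $x_{i,1},\ldots,x_{i,m_i+1}\in\mathcal{X}_i$ with $\boldsymbol{g}_i(x_{i,1}),\ldots,\boldsymbol{g}_i(x_{i,m_i+1})$ affinely independent. (BSS-b) for each $i$, $\mathcal{X}_i$ is a compact subset of a Euclidean space with norm-induced metric, $\mathfrak{C}_i$ is a bounded polyhedral cover of $\mathcal{X}_i$ (finite collection of bounded polyhedra whose union contains $\mathcal{X}_i$, any two intersecting in a common face) with vertex set $V(\mathfrak{C}_i)\subseteq\mathcal{X}_i$, $\{g_{i,0},\ldots,g_{i,m_i}\}$ is a vertex interpolation function set for $\mathfrak{C}_i$ (non-negative functions indexed by the vertices with $g_{\boldsymbol{v}}(\boldsymbol{v}')=\mathbf{1}_{\{\boldsymbol{v}=\boldsymbol{v}'\}}$, summing to $1$ over the vertices of each face on that face, and vanishing on each face not having $\boldsymbol{v}$ as a vertex) with $\int g_{i,j}\,\mathrm{d}\mu_i>0$ for all $j$, and $\mathcal{G}_i=\{g_{i,1},\ldots,g_{i,m_i}\}$. Oracle: for $\boldsymbol{y}\in\mathbb{R}^m$ returns $(\boldsymbol{x}^\star,\beta^\star)$, $\boldsymbol{x}^\star$ a minimizer of $f(\boldsymbol{x})-\langle\boldsymbol{g}(\boldsymbol{x}),\boldsymbol{y}\rangle$ over $\boldsymbol{\mathcal{X}}$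 and $\beta^\star$ the minimal value. Algorithm 1: for $r=0,1,\ldots$: solve the LP $\alpha^{(r)}:=\max\{y_0+\langle\bar{\boldsymbol{g}},\boldsymbol{y}\rangle:y_0+\langle\boldsymbol{g}(\boldsymbol{x}),\boldsymbol{y}\rangle\le f(\boldsymbol{x})\ \forall\boldsymbol{x}\in\boldsymbol{\mathcal{X}}^{\dagger(r)}\}$, obtaining an optimizer $(y^{(r)}_0,\boldsymbol{y}^{(r)})$ and an optimizer $(\mu^{(r)}_{\boldsymbol{x}})_{\boldsymbol{x}\in\boldsymbol{\mathcal{X}}^{\dagger(r)}}$ of the dual LP $\min\{\sum_{\boldsymbol{x}}f(\boldsymbol{x})\mu_{\boldsymbol{x}}:\sum_{\boldsymbol{x}}\mu_{\boldsymbol{x}}=1,\ \sum_{\boldsymbol{x}}\boldsymbol{g}(\boldsymbol{x})\mu_{\boldsymbol{x}}=\bar{\boldsymbol{g}},\ \mu_{\boldsymbol{x}}\ge0\}$; call $\mathtt{Oracle}(\boldsymbol{y}^{(r)})$ obtaining $(\boldsymbol{x}^\star,s^{(r)})$; if $y^{(r)}_0-s^{(r)}\le\epsilon_{\mathsf{LSIP}}$, stop; else choose a finite $\boldsymbol{\mathcal{X}}^\star\subset\boldsymbol{\mathcal{X}}$ with $\boldsymbol{x}^\star\in\boldsymbol{\mathcal{X}}^\star$ and set $\boldsymbol{\mathcal{X}}^{\dagger(r+1)}:=\boldsymbol{\mathcal{X}}^{\dagger(r)}\cup\boldsymbol{\mathcal{X}}^\star$. At the terminal $r$, output $\alpha^{\mathsf{UB}}_{\mathsf{relax}}:=\alpha^{(r)}$,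 $\alpha^{\mathsf{LB}}_{\mathsf{relax}}:=\alpha^{(r)}-y^{(r)}_0+s^{(r)}$, $\hat y_0:=s^{(r)}$, $\hat{\boldsymbol{y}}:=\boldsymbol{y}^{(r)}$, $\hat{\mu}:=\sum_{\boldsymbol{x}\in\boldsymbol{\mathcal{X}}^{\dagger(r)}}\mu^{(r)}_{\boldsymbol{x}}\delta_{\boldsymbol{x}}$. $\Gamma([\mu_1]_{\mathcal{G}_1},\ldots,[\mu_N]_{\mathcal{G}_N})$: probability measures on $\boldsymbol{\mathcal{X}}$ whose $i$-th marginal $\nu$ satisfies $\int g\,\mathrm{d}\nu=\int g\,\mathrm{d}\mu_i$ for all $g\in\mathcal{G}_i$, for all $i$. An $\epsilon$-optimal solution is a feasible solution whose objective is within $\epsilon$ of the optimal value. *)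

(* Defs.v *)
From HB Require Import structures.
From mathcomp Require Import all_boot all_order all_algebra.
From mathcomp Require Import all_classical all_reals all_analysis.
Set Implicit Arguments. Unset Strict Implicit. Unset Printing Implicit Defensive.
Import Order.TTheory GRing.Theory Num.Theory.
Local Open Scope classical_set_scope.
Local Open Scope ring_scope.

Section Metric.
Context {R : realType} {T : Type}.

Definition is_metric (d : T -> T -> R) : Prop :=
  [/\ forall x y, d x y = 0 <-> x = y,
      forall x y, d x y = d y x &
      forall x y z, d x z <= d x y + d y z].

Definition mball (d : T -> T -> R) (x : T) (r : R) : set T :=
  [set y | d x y < r].

Definition mopen (d : T -> T -> R) (U : set T) : Prop :=
  forall x, U x -> exists2 r : R, 0 < r & mball d x r `<=` U.

Definition mcompact (d : T -> T -> R) : Prop :=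
  forall C : set (set T), C `<=` mopen d -> (forall x, exists2 U, C U & U x) ->
  exists (k : nat) (U : 'I_k -> set T),
    (forall l, C (U l)) /\ (forall x, exists l, U l x).

Definition mcontinuous (d : T -> T -> R) (g : T -> R) : Prop :=
  forall x (e : R), 0 < e -> exists2 del : R, 0 < del &
    forall y, d x y < del -> `|g x - g y| < e.

End Metric.

Definition borel {R : realType} {T : pointedType} (d : T -> T -> R) :=
  g_sigma_algebraType (mopen d).

Definition msupport {R : realType} {T : pointedType} (d : T -> T -> R)
  (mu : set (borel d) -> \bar R) : set T :=
  [set x | forall U : set T, mopen d U -> U x -> (0 < mu U)%E].

Definition is_probability {dd} {T : measurableType dd} {R : realType}
  (P : set T -> \bar R) : Prop :=
  [/\ P set0 = 0%E, (forall A, measurable A -> (0 <= P A)%E),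
      semi_sigma_additive P & P setT = 1%E].

Definition affinely_independent {R : realType} {J : finType} {n : nat}
  (v : 'I_n -> J -> R) : Prop :=
  forall c : 'I_n -> R, \sum_(k < n) c k = 0 ->
    (forall j, \sum_(k < n) c k * v k j = 0) -> forall k, c k = 0.

Section Polyhedra.
Context {R : realType} {n : nat}.

Definition dotv (u v : 'rV[R]_n) : R := \sum_(j < n) u ord0 j * v ord0 j.

Definition is_norm (nu : 'rV[R]_n -> R) : Prop :=
  [/\ forall x, nu x = 0 -> x = 0,
      forall (a : R) x, nu (a *: x) = `|a| * nu x &
      forall x y, nu (x + y) <= nu x + nu y].

Definition is_polyhedron (P : set 'rV[R]_n) : Prop :=
  exists (k : nat) (a : 'I_k -> 'rV[R]_n) (b : 'I_k -> R),
    P = [set x | forall l, dotv (a l) x <= b l].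

Definition is_bounded (P : set 'rV[R]_n) : Prop :=
  exists M : R, forall x, P x -> forall j, `|x ord0 j| <= M.

(** faces of P: intersections of P with the hyperplane of a valid
    inequality (includes P itself and the empty set) *)
Definition is_face (P F : set 'rV[R]_n) : Prop :=
  exists (c : 'rV[R]_n) (b : R),
    (forall x, P x -> dotv c x <= b) /\ F = P `&` [set x | dotv c x = b].

Definition is_vertex (P : set 'rV[R]_n) (v : 'rV[R]_n) : Prop :=
  is_face P [set v].

Definition bounded_polyhedral_cover (k : nat) (C : 'I_k -> set 'rV[R]_n)
  (X : set 'rV[R]_n) : Prop :=
  [/\ forall l, is_polyhedron (C l) /\ is_bounded (C l),
      X `<=` [set x | exists l, C l x] &
      forall l l', is_face (C l) (C l `&` C l') /\ is_face (C l') (C l `&` C l')].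

Definition cover_vertices (k : nat) (C : 'I_k -> set 'rV[R]_n) : set 'rV[R]_n :=
  [set v | exists l, is_vertex (C l) v].

End Polyhedra.

Unset Implicit Arguments.

Section LSIP.
Context {R : realType} {N : nat} (X : 'I_N -> pointedType)
  (d : forall i, X i -> X i -> R).

Definition dsum (x y : forall i, X i) : R := \sum_(i < N) d i (x i) (y i).

Definition prodX := borel dsum.

Context (m : 'I_N -> nat) (g : forall i, 'I_(m i) -> X i -> R)
  (mu : forall i, probability (borel (d i)) R) (f : (forall i, X i) -> R).

(** index set of the vector g(x) in R^m, m = sum_i m_i : pairs (i, j) *)
Definition gidx := {i : 'I_N & 'I_(m i)}.

Definition gvec (x : forall i, X i) (k : gidx) : R :=
  g (tag k) (tagged k) (x (tag k)).

Definition gbar (k : gidx) : R := Rintegral (mu (tag k)) setT (g (tag k) (tagged k)).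

Definition lsip_obj (y0 : R) (y : gidx -> R) : R :=
  y0 + \sum_(k : gidx) gbar k * y k.

Definition lsip_feasible (A : set (forall i, X i)) (y0 : R) (y : gidx -> R)
  : Prop :=
  forall x, A x -> y0 + \sum_(k : gidx) gvec x k * y k <= f x.

Definition lp_optimal (A : set (forall i, X i)) (y0 : R) (y : gidx -> R)
  : Prop :=
  lsip_feasible A y0 y /\
  forall y0' y', lsip_feasible A y0' y' -> lsip_obj y0' y' <= lsip_obj y0 y.

Definition lp_bounded_superlevel (A : set (forall i, X i)) : Prop :=
  forall t : R, exists M : R, forall y0 y, lsip_feasible A y0 y ->
    t <= lsip_obj y0 y -> `|y0| <= M /\ forall k, `|y k| <= M.

Definition dual_feasible (A : set (forall i, X i)) (w : (forall i, X i) -> R)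
  : Prop :=
  [/\ forall x, A x -> 0 <= w x,
      \sum_(x \in A) w x = 1 &
      forall k, \sum_(x \in A) gvec x k * w x = gbar k].

Definition dual_optimal (A : set (forall i, X i)) (w : (forall i, X i) -> R)
  : Prop :=
  dual_feasible A w /\
  forall w', dual_feasible A w' ->
    \sum_(x \in A) f x * w x <= \sum_(x \in A) f x * w' x.

(** Oracle(y) may return (xs, b) iff xs minimizes f - <g(.), y> over the
    product space and b is the minimal value *)
Definition oracle_output (y : gidx -> R) (xs : forall i, X i) (b : R) : Prop :=
  (forall x, f xs - \sum_(k : gidx) gvec xs k * y k
             <= f x - \sum_(k : gidx) gvec x k * y k) /\
  b = f xs - \sum_(k : gidx) gvec xs k * y k.

Definition lsip_value : \bar R :=
  ereal_sup [set z | exists y0 y, lsip_feasible setT y0 y /\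
                                  z = (lsip_obj y0 y)%:E].

Definition Gamma (P : set prodX -> \bar R) : Prop :=
  is_probability P /\
  forall i (j : 'I_(m i)),
    (\int[pushforward P (fun x : prodX => (x i : borel (d i)))]_z
        (g i j z)%:E = \int[mu i]_z (g i j z)%:E)%E.

Definition mmot_value : \bar R :=
  ereal_inf [set z | exists P, Gamma P /\ z = (\int[P]_x (f x)%:E)%E].

Definition discrete_measure (A : set (forall i, X i))
  (w : (forall i, X i) -> R) : set prodX -> \bar R :=
  fun B => (\sum_(x \in A) (w x)%:E * \d_(x : prodX) B)%E.

Definition BSS_a : Prop :=
  forall i, [/\ @msupport _ _ (d i) (mu i) = setT,
                forall j, mcontinuous (d i) (g i j) &
                exists p : 'I_(m i).+1 -> X i,
                  affinely_independent (fun l j => g i j (p l))].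

(** Condition (BSS-b): X_i is (isometric to) a compact subset of a
    Euclidean space R^n with a norm-induced metric, via e; C is a bounded
    polyhedral cover with vertex set inside X_i; the vertices are enumerated
    as vt 0, ..., vt m_i and Gv l = g_{i,l} is the interpolation function of
    vertex vt l, with g_{i,l+1} the given g_{i,l+1} (Gv 0 = g_{i,0}). *)
Definition BSS_b : Prop :=
  forall i, exists (n : nat) (nu : 'rV[R]_n -> R) (e : X i -> 'rV[R]_n)
    (nC : nat) (C : 'I_nC -> set 'rV[R]_n) (vt : 'I_(m i).+1 -> 'rV[R]_n)
    (Gv : 'I_(m i).+1 -> X i -> R),
    [/\ is_norm nu /\ (forall x y, d i x y = nu (e x - e y)),
        bounded_polyhedral_cover C (range e) /\
          cover_vertices C `<=` range e,
        injective vt /\ range vt = cover_vertices C,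
        forall j : 'I_(m i), Gv (lift ord0 j) = g i j &
        [/\ forall l x, 0 <= Gv l x,
            forall l l' x, e x = vt l' -> Gv l x = (l == l')%:R,
            forall c F, is_face (C c) F -> forall x, F (e x) ->
              \sum_(l < (m i).+1 | `[< is_vertex F (vt l) >]) Gv l x = 1,
            forall c F l, is_face (C c) F -> ~ is_vertex F (vt l) ->
              forall x, F (e x) -> Gv l x = 0 &
            forall l, (0 < \int[mu i]_x (Gv l x)%:E)%E]].

End LSIP.

(* Main.v *)
Require Import Defs.
From HB Require Import structures.
From Stdlib Require Import Classical.
From mathcomp Require Import all_boot all_order all_algebra.
From mathcomp Require Import all_classical all_reals all_analysis.
From mathcomp Require Import measurable_realfun.
From mathcomp Require Import ring lra.
Import Order.TTheory GRing.Theory Num.Theory.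
Local Open Scope classical_set_scope.
Local Open Scope ring_scope.

Set Implicit Arguments. Unset Strict Implicit.
Section Farkas.
Variable R : realFieldType.

Definition dotf (J : finType) (u v : J -> R) := \sum_j u j * v j.

Lemma dotf_linl (J : finType) (a b : R) (u v w : J -> R) :
  dotf (fun j => a * u j + b * v j) w = a * dotf u w + b * dotf v w.
Proof.
rewrite /dotf !mulr_sumr -big_split /=; apply: eq_bigr => j _; ring.
Qed.

Lemma dotf_linr (J : finType) (a b : R) (u v w : J -> R) :
  dotf w (fun j => a * u j + b * v j) = a * dotf w u + b * dotf w v.
Proof.
rewrite /dotf !mulr_sumr -big_split /=; apply: eq_bigr => j _; ring.
Qed.

Lemma farkas (J : finType) (m : nat) (a : 'I_m -> J -> R) (c : J -> R) :
 (exists lam : 'I_m -> R, (forall i, 0 <= lam i) /\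
    forall j, c j = \sum_i lam i * a i j) \/
 (exists z : J -> R, (forall i, dotf (a i) z <= 0) /\ 0 < dotf c z).
Proof.
elim: m a c => [|m IH] a c.
  case: (boolP [forall j, c j == 0]) => [/forallP H | H].
    left; exists (fun _ => 0); split => // j; rewrite big_ord0; exact/eqP.
  right; exists c; split => [[]//|].
  move/forallPn: H => [j0 Hj0]; rewrite /dotf (bigD1 j0) //=.
  have h1 : 0 < c j0 * c j0 by rewrite -expr2 exprn_even_gt0.
  have h2 : 0 <= \sum_(j | j != j0) c j * c j.
    by apply: sumr_ge0 => j _; rewrite -expr2 sqr_ge0.
  lra.
pose a0 := fun i : 'I_m => a (lift ord0 i).
case: (IH a0 c) => [[lam [lge0 Hc]] | [z [Hz Hcz]]].
  left; exists (fun i => if unlift ord0 i is Some i' then lam i' else 0).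
  split => [i|j]; first by case: (unlift ord0 i).
  rewrite big_ord_recl /= unlift_none mul0r add0r Hc.
  by apply: eq_bigr => i _; rewrite liftK.
pose t := dotf (a ord0) z.
have [tle0|tgt0] := lerP t 0.
  right; exists z; split => // i.
  by case: (unliftP ord0 i) => [i' ->|->] //; exact: Hz.
pose a' := fun i j => t * a0 i j + (- dotf (a0 i) z) * a ord0 j.
pose c' := fun j => t * c j + (- dotf c z) * a ord0 j.
case: (IH a' c') => [[mu [mge0 Hc']] | [z' [Hz' Hcz']]].
  pose kap := (dotf c z - \sum_i mu i * dotf (a0 i) z) / t.
  have kge0 : 0 <= kap.
    apply: divr_ge0; last exact: ltW.
    have : \sum_i mu i * dotf (a0 i) z <= 0.
      rewrite -oppr_ge0 -sumrN; apply: sumr_ge0 => i _.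
      rewrite -mulrN; apply: mulr_ge0 => //; rewrite oppr_ge0; exact: Hz.
    lra.
  left; exists (fun i => if unlift ord0 i is Some i' then mu i' else kap).
  split => [i|j]; first by case: (unlift ord0 i).
  rewrite big_ord_recl /= unlift_none.
  under eq_bigr do rewrite liftK.
  have tn0 : t != 0 by rewrite gt_eqF.
  apply: (mulfI tn0).
  have := Hc' j; rewrite /c' /a' => E.
  have E2 : \sum_(i < m) mu i * (t * a0 i j + (- dotf (a0 i) z) * a ord0 j) =
     t * \sum_(i < m) mu i * a0 i j - (\sum_i mu i * dotf (a0 i) z) * a ord0 j.
    rewrite mulr_sumr mulr_suml -sumrB; apply: eq_bigr => i _; ring.
  rewrite E2 in E.
  have tk : t * kap = dotf c z - \sum_i mu i * dotf (a0 i) z.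
    by rewrite /kap mulrCA mulfV // mulr1.
  rewrite mulrDr mulrA tk.
  rewrite /a0 in E *; lra.
right; pose s := dotf (a ord0) z'.
exists (fun j => t * z' j + (- s) * z j); split => [i|].
  case: (unliftP ord0 i) => [i' ->|->].
    rewrite (dotf_linr t (- s)) -/(a0 i').
    have := Hz' i'; rewrite /a' (dotf_linl t (- dotf (a0 i') z)).
    have -> : dotf (a ord0) z' = s by [].
    rewrite /dotf; lra.
  rewrite (dotf_linr t (- s)) -/t -/s; lra.
rewrite (dotf_linr t (- s)).
have := Hcz'; rewrite /c' (dotf_linl t (- dotf c z)) -/s; lra.
Qed.

End Farkas.

Section LPD.
Variable R : realFieldType.

Lemma big_optionE (J : finType) (F : option J -> R) :
  \sum_(o : option J) F o = F None + \sum_(j : J) F (Some j).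
Proof.
have -> : \sum_(o : option J) F o = \sum_(o <- None :: map Some (enum J)) F o.
  apply: perm_big; apply: uniq_perm.
  - exact: index_enum_uniq.
  - rewrite cons_uniq map_inj_uniq ?enum_uniq; last by move=> a b [].
    rewrite andbT; apply/negP => /mapP [x _]; discriminate.
  - by case => [a|]; rewrite mem_index_enum /= ?inE // map_f // mem_enum.
by rewrite big_cons big_map big_enum.
Qed.

Lemma dotf_scale (J : finType) (k : R) (u v : J -> R) :
  dotf u (fun j => k * v j) = k * dotf u v.
Proof. rewrite /dotf mulr_sumr; apply: eq_bigr => j _; ring. Qed.

Lemma lp_duality (J : finType) (n : nat) (a : nat -> J -> R) (b : nat -> R)
  (c : J -> R) (alpha : R) (z0 : J -> R) :
 (forall k, (k < n)%N -> dotf (a k) z0 <= b k) ->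
 (forall z, (forall k, (k < n)%N -> dotf (a k) z <= b k) -> dotf c z <= alpha) ->
 exists lam : nat -> R, (forall k, 0 <= lam k) /\
   (forall j, c j = \sum_(k < n) lam k * a k j) /\
   \sum_(k < n) lam k * b k <= alpha.
Proof.
move=> Hz0 Hopt.
pose A := fun (i : 'I_n.+1) (o : option J) =>
  if (i < n)%N then (match o with Some j => a i j | None => b i end)
  else (match o with Some _ => 0 | None => 1 end).
pose C := fun o : option J => match o with Some j => c j | None => alpha end.
have dA : forall (i : 'I_n.+1) (z : option J -> R), dotf (A i) z =
   if (i < n)%N then b i * z None + dotf (a i) (fun j => z (Some j))
   else z None.
  move=> i z; rewrite /dotf big_optionE /A; case: ifP => _ //.
  by rewrite mul1r big1 ?addr0 // => j _; rewrite mul0r.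
have dC : forall z : option J -> R, dotf C z =
   alpha * z None + dotf c (fun j => z (Some j)).
  by move=> z; rewrite /dotf big_optionE.
case: (farkas A C) => [[lam [lge0 Hc]] | [z [Hz Hcz]]].
  exists (fun k => lam (inord k)); split => // .
  have Ew : forall i : 'I_n, lam (inord i) = lam (widen_ord (leqnSn n) i).
    by move=> i; congr lam; apply: val_inj; rewrite /= inordK // ltnS ltnW.
  split.
    move=> j; transitivity (C (Some j)) => //; rewrite Hc big_ord_recr /= /A /= ltnn mulr0 addr0.
    by apply: eq_bigr => i _; rewrite /= ltn_ord Ew.
  have := Hc None; rewrite big_ord_recr /= /A /= ltnn mulr1.
  have -> : \sum_(i < n) lam (widen_ord (leqnSn n) i) *
     (if (widen_ord (leqnSn n) i < n)%N then b (widen_ord (leqnSn n) i) else 1)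
     = \sum_(i < n) lam (inord i) * b i.
    by apply: eq_bigr => i _; rewrite /= ltn_ord Ew.
  have := lge0 ord_max; lra.
exfalso.
pose tau := z None; pose y := fun j => z (Some j).
have Hmax : ((@ord_max n : nat) < n)%N = false by rewrite /= ltnn.
have tle0 : tau <= 0 by have := Hz ord_max; rewrite dA Hmax.
have Hk : forall k, (k < n)%N -> b k * tau + dotf (a k) y <= 0.
  move=> k kn; have := Hz (inord k); rewrite dA inordK ?kn //.
  by rewrite ltnS ltnW.
move: Hcz; rewrite dC -/tau -/y => Hcz.
have [tlt0|teq0] := ltrP tau 0.
  pose q := (- tau)^-1.
  have qgt0 : 0 < q by rewrite invr_gt0 oppr_gt0.
  have qt : q * (- tau) = 1 by rewrite mulVf // oppr_eq0 lt_eqF.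
  have := Hopt (fun j => q * y j).
  rewrite dotf_scale.
  have H1 : forall k, (k < n)%N -> dotf (a k) (fun j => q * y j) <= b k.
    move=> k kn; rewrite dotf_scale.
    have h : dotf (a k) y <= b k * (- tau) by have := Hk k kn; lra.
    have := ler_wpM2l (ltW qgt0) h.
    by rewrite mulrCA qt mulr1.
  move=> /(_ H1) H2.
  have ntau : 0 < - tau by rewrite oppr_gt0.
  have := ler_wpM2l (ltW ntau) H2.
  rewrite mulrA (mulrC (- tau)) qt mul1r.
  have : alpha * tau = - (alpha * (- tau)) by ring.
  lra.
have t0 : tau = 0 by apply/eqP; rewrite eq_le tle0 teq0.
rewrite t0 mulr0 add0r in Hcz.
pose T := (`|alpha - dotf c z0| + 1) / dotf c y.
have Tge0 : 0 <= T by apply: divr_ge0; [apply: addr_ge0|apply: ltW].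
have := Hopt (fun j => 1 * z0 j + T * y j).
rewrite dotf_linr mul1r.
have -> : T * dotf c y = `|alpha - dotf c z0| + 1.
  by rewrite /T mulrAC -mulrA mulfV ?gt_eqF // mulr1.
have hh : forall k, (k < n)%N -> dotf (a k) (fun j => 1 * z0 j + T * y j) <= b k.
  move=> k kn; rewrite dotf_linr mul1r.
  have := Hk k kn; rewrite t0 mulr0 add0r => h.
  have := Hz0 k kn.
  have : T * dotf (a k) y <= 0 by rewrite mulr_ge0_le0.
  lra.
move=> /(_ hh).
have := ler_norm (alpha - dotf c z0).
lra.
Qed.

End LPD.

Section Pig.
Variable R : archiFieldType.

Lemma truncn_close (u v : R) : 0 <= u -> 0 <= v ->
  Num.truncn u = Num.truncn v -> `|u - v| < 1.
Proof.
move=> u0 v0 E.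
have /andP[h1 h2] := truncn_itv u0.
have /andP[h3 h4] := truncn_itv v0.
rewrite E in h1 h2; rewrite -natr1 in h2 h4.
rewrite ltr_norml; apply/andP; split; lra.
Qed.

Lemma pigeon (I : finType) (B del : R) (p : nat -> I -> R) : 0 < del ->
  (forall n i, `|p n i| <= B) ->
  exists r r', (r < r')%N /\ forall i, `|p r i - p r' i| < del.
Proof.
move=> dgt0 pB.
pose L := Num.truncn (2 * B / del).
pose u := fun n i => (p n i + B) / del.
have u0 : forall n i, 0 <= u n i.
  move=> n i; apply: divr_ge0; last exact: ltW.
  have := pB n i; rewrite ler_norml => /andP[]; lra.
have uL : forall n i, (Num.truncn (u n i) <= L)%N.
  move=> n i; apply: le_truncn; rewrite /u ler_pM2r ?invr_gt0 //.
  have := pB n i; rewrite ler_norml => /andP[]; lra.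
pose T := {ffun I -> 'I_L.+1}.
pose cell := fun k : 'I_#|T|.+1 => [ffun i => (inord (Num.truncn (u k i)) : 'I_L.+1)] : T.
apply: NNPP => Hno.
have close : forall k1 k2, cell k1 = cell k2 -> forall i,
    `|p k1 i - p k2 i| < del.
  move=> k1 k2 E i.
  have := congr1 (fun h : T => val (h i)) E; rewrite /cell !ffunE /=.
  rewrite !inordK ?ltnS ?uL // => /(truncn_close (u0 _ _) (u0 _ _)).
  rewrite /u -mulrBl (_ : p k1 i + B - (p k2 i + B) = p k1 i - p k2 i); last by ring.
  rewrite normrM [`|del^-1|]gtr0_norm ?invr_gt0 //.
  by rewrite ltr_pdivrMr // mul1r.
have inj : injective cell.
  move=> k1 k2 E; apply: val_inj => /=.
  case: (ltngtP k1 k2) => // h; exfalso; apply: Hno.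
    by exists k1, k2; split => //; apply: close.
  exists k2, k1; split => //; apply: close; done.
have := leq_card cell inj; rewrite card_ord ltnn //.
Qed.

End Pig.

Unset Implicit Arguments. Set Strict Implicit.
Section Cpt.
Context {R : realType} {T : Type} (d : T -> T -> R) (dm : is_metric d).

Lemma met_ge0 x y : 0 <= d x y.
Proof.
case: dm => H0 Hs Ht.
have := Ht x y x; rewrite (proj2 (H0 x x) erefl) Hs; lra.
Qed.

Lemma met_xx x : d x x = 0.
Proof. by case: dm => H0 _ _; apply/H0. Qed.

Lemma mball_mopen x r : mopen d (mball d x r).
Proof.
move=> y; rewrite /mball /= => dxy; exists (r - d x y); first lra.
move=> z; rewrite /mball /= => dyz; case: dm => _ _ Ht; have := Ht x y z; lra.
Qed.

Lemma mcompact_bnd (h : T -> R) : mcompact d ->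
  (forall x, exists2 r, 0 < r & exists c, forall y, d x y < r -> `|h y| <= c) ->
  exists B, forall y, `|h y| <= B.
Proof.
move=> cpt loc.
pose C := [set U | mopen d U /\ exists c, forall y, U y -> `|h y| <= c].
have [k [U [CU cov]]] : exists (k : nat) (U : 'I_k -> set T),
    (forall l, C (U l)) /\ (forall x, exists l, U l x).
  apply: cpt; first by move=> U [].
  move=> x; have [r r0 [c Hc]] := loc x.
  exists (mball d x r); last by rewrite /mball /= met_xx.
  split; [exact: mball_mopen | by exists c].
have [cl Hcl] := choice (fun l => (proj2 (CU l))).
exists (\sum_l `|cl l|) => y.
have [l Hl] := cov y.
apply: le_trans (Hcl l y Hl) _.
apply: le_trans (ler_norm _) _.
by rewrite (bigD1 l) //= lerDl sumr_ge0.
Qed.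

End Cpt.

Section RawInt.
Local Open Scope ereal_scope.
Context d (T : measurableType d) (R : realType) (D : set T).
Import HBNNSimple.

Let eq_raw0 (m2 m1 : set T -> \bar R) (f : T -> \bar R) :
  (forall A, measurable A -> A `<=` D -> m1 A = m2 A) ->
  [set sintegral m1 h | h in
    [set h : {nnsfun T >-> R} | (forall x, (h x)%:E <= (f \_ D) x)]] `<=`
  [set sintegral m2 h | h in
    [set h : {nnsfun T >-> R} | (forall x, (h x)%:E <= (f \_ D) x)]].
Proof.
move=> m12 _ [h hfD <-] /=; exists h => //; apply: eq_fsbigr => r _.
have [hrD|hrD] := pselect (h @^-1` [set r] `<=` D); first by rewrite m12.
suff : r = 0%R by move=> ->; rewrite !mul0e.
apply: contra_notP hrD => /eqP r0 t/= htr.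
have := hfD t.
rewrite /patch/=; case: ifPn; first by rewrite inE.
move=> tD.
move: r0; rewrite -htr => ht0.
by rewrite le_eqVlt eqe (negbTE ht0)/= lte_fin// ltNge// fun_ge0.
Qed.

Lemma eq_raw_integral (m2 m1 : set T -> \bar R) (f : T -> \bar R) :
    (forall A, measurable A -> A `<=` D -> m1 A = m2 A) ->
  \int[m1]_(x in D) f x = \int[m2]_(x in D) f x.
Proof.
move=> m12; rewrite /integral funepos_restrict funeneg_restrict.
by congr (ereal_sup _ - ereal_sup _); rewrite eqEsubset; split;
  apply: eq_raw0 => A /m12 // /[apply].
Qed.
End RawInt.

Section MkMeas.
Local Open Scope ereal_scope.
Context d (T : measurableType d) (R : realType) (P : set T -> \bar R)
  (hP : is_probability P).

Definition mkmeas : set T -> \bar R :=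
  let _ := hP in fun A => if `[< measurable A >] then P A else 0.

Lemma mkmeasE A : measurable A -> mkmeas A = P A.
Proof. by move=> mA; rewrite /mkmeas asboolT. Qed.

Let mk0 : mkmeas set0 = 0.
Proof. by rewrite mkmeasE //; case: hP. Qed.

Let mk_ge0 A : 0 <= mkmeas A.
Proof. rewrite /mkmeas; case: asboolP => // mA; by case: hP => _ + _ _; apply. Qed.

Let mk_sigma : semi_sigma_additive mkmeas.
Proof.
move=> F mF tF mU; rewrite mkmeasE //.
under eq_fun do (under eq_bigr do rewrite mkmeasE //).
by case: hP => _ _ + _; apply.
Qed.

HB.instance Definition _ := isMeasure.Build _ _ _ mkmeas mk0 mk_ge0 mk_sigma.

Lemma mkmeasT : mkmeas setT = 1.
Proof. by rewrite mkmeasE //; case: hP. Qed.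

End MkMeas.


Lemma maxr_posneg (R : realDomainType) (x : R) : Num.max x 0 - Num.max (- x) 0 = x.
Proof.
rewrite !maxEle; case: leP => ?; case: leP => ?; lra.
Qed.

Section Disc.
Context d (T : measurableType d) (R : realType) (U : Type) (x0 : U)
  (phi : U -> T) (w : U -> R).

Definition dm_ (s : seq U) : (measure T R)^nat :=
  fun k => mscale (`|w (nth x0 s k)|%R)%:nng (\d_(phi (nth x0 s k))).

Definition dmeas (s : seq U) := msum (dm_ s) (size s).
Local Open Scope ereal_scope.

Lemma dmeasE s A : dmeas s A = \sum_(x <- s) (`|w x|%R)%:E * \d_(phi x) A.
Proof.
by rewrite /dmeas /msum (big_nth x0) big_mkord.
Qed.

Lemma int_dm_pos s n (h : T -> R) : measurable_fun setT h ->
  \int[dm_ s n]_x ((fun x => (h x)%:E)^\+ x) =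
  (`|w (nth x0 s n)| * Num.max (h (phi (nth x0 s n))) 0)%:E.
Proof.
move=> mh.
have mh' : measurable_fun [set: T] (fun x => (h x)%:E) by apply/measurable_EFinP.
rewrite /dm_ ge0_integral_mscale //; last exact: measurable_funepos.
rewrite integral_dirac //; last exact: measurable_funepos.
by rewrite diracT mul1e funeposE EFinM EFin_max.
Qed.

Lemma int_dm_neg s n (h : T -> R) : measurable_fun setT h ->
  \int[dm_ s n]_x ((fun x => (h x)%:E)^\- x) =
  (`|w (nth x0 s n)| * Num.max (- h (phi (nth x0 s n))) 0)%:E.
Proof.
move=> mh.
have mh' : measurable_fun [set: T] (fun x => (h x)%:E) by apply/measurable_EFinP.
rewrite /dm_ ge0_integral_mscale //; last exact: measurable_funeneg.
rewrite integral_dirac //; last exact: measurable_funeneg.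
by rewrite diracT mul1e funenegE EFinM EFin_max EFinN.
Qed.

Lemma integral_dmeas s (h : T -> R) : measurable_fun setT h ->
  \int[dmeas s]_x (h x)%:E = (\sum_(x <- s) `|w x| * h (phi x))%R%:E.
Proof.
move=> mh.
have mh' : measurable_fun [set: T] (fun x => (h x)%:E) by apply/measurable_EFinP.
rewrite integralE.
rewrite ge0_integral_measure_sum //; last exact: measurable_funepos.
rewrite ge0_integral_measure_sum //; last exact: measurable_funeneg.
under eq_bigr do rewrite int_dm_pos //.
under [X in _ - X]eq_bigr do rewrite int_dm_neg //.
rewrite !sumEFin -EFinB -sumrB (big_nth x0) big_mkord; congr EFin.
by apply: eq_bigr => k _; rewrite -mulrBr maxr_posneg.
Qed.
End Disc.

Section Main.
Context (R : realType) (N : nat) (X : 'I_N -> pointedType)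
  (d : forall i : 'I_N, X i -> X i -> R)
  (d_metric : forall i, is_metric (d i))
  (X_compact : forall i, mcompact (d i))
  (mu : forall i : 'I_N, probability (borel (d i)) R)
  (f : (forall i : 'I_N, X i) -> R) (Lf : R) (Lf_gt0 : 0 < Lf)
  (f_lip : forall x y, `|f x - f y| <= Lf * dsum X d x y)
  (m : 'I_N -> nat) (g : forall i : 'I_N, 'I_(m i) -> X i -> R)
  (g_int : forall i (j : 'I_(m i)),
      (mu i).-integrable setT (fun x => (g i j x)%:E))
  (BSS : BSS_a X d m g mu \/ BSS_b X d m g mu).

Lemma dsum_ge0 x y : 0 <= dsum X d x y.
Proof. by apply: sumr_ge0 => i _; apply: (@met_ge0 _ _ _ (d_metric _)). Qed.

Lemma d_le_dsum i x y : d i (x i) (y i) <= dsum X d x y.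
Proof.
rewrite /dsum (bigD1 i) //= lerDl; apply: sumr_ge0 => k _; exact: (@met_ge0 _ _ _ (d_metric _)).
Qed.

Lemma f_bounded : exists BF, forall x, `|f x| <= BF.
Proof.
have hc : forall i, exists c, forall y : X i, `|d i point y| <= c.
  move=> i; have [|B HB] := @mcompact_bnd _ _ _ (d_metric i) (d i point) (X_compact i); last by exists B.
  move=> x; exists 1 => //; exists (d i point x + 1) => y dxy.
  rewrite ger0_norm; last exact: (@met_ge0 _ _ _ (d_metric _)).
  have := (let: And3 _ _ Ht := d_metric i in Ht) point x y; lra.
have [c Hc] := choice hc.
pose x0 : forall i, X i := fun i => point.
exists (`|f x0| + Lf * \sum_i (c i + c i)) => x.
have H1 := f_lip x x0.
have H2 : dsum X d x x0 <= \sum_i (c i + c i).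
  apply: ler_sum => i _.
  case: (d_metric i) => _ Hs Ht.
  have := Ht (x i) point (x0 i); rewrite Hs.
  have := Hc i (x i); have := Hc i (x0 i).
  rewrite !ger0_norm; [|exact: (@met_ge0 _ _ _ (d_metric _))|exact: (@met_ge0 _ _ _ (d_metric _))]; lra.
have H3 := ler_wpM2l (ltW Lf_gt0) H2.
have := ler_norm (f x - f x0); have := ler_normD (f x - f x0) (f x0).
rewrite subrK; lra.
Qed.

Lemma g_bounded1 i (j : 'I_(m i)) : exists c, forall y, `|g i j y| <= c.
Proof.
case: BSS => [Ha|Hb].
  have [_ Hc _] := Ha i.
  have [|B HB] := @mcompact_bnd _ _ _ (d_metric i) (g i j) (X_compact i); last by exists B.
  move=> x.
  have [del del0 Hdel] := Hc j x 1 ltr01.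
  exists del => //; exists (`|g i j x| + 1) => y dxy.
  have := Hdel y dxy; have := ler_normD (g i j y - g i j x) (g i j x).
  rewrite subrK distrC; lra.
have [n [nu [e [nC [C [vt [Gv [_ [[_ Hcov _] _] _ Hg [Gnn _ Gsum Gzero _]]]]]]]]] := Hb i.
exists 1 => y.
have [l Hl] : exists l, C l (e y) by apply: Hcov; exists y.
have Hface : is_face (C l) (C l).
  exists 0, 0; split.
    by move=> x _; rewrite /dotv big1 // => k _; rewrite mxE mul0r.
  apply/seteqP; split => x //=; first by move=> Cx; split => //; rewrite /dotv big1 // => k _; rewrite mxE mul0r.
  by case.
have S1 := Gsum l (C l) Hface y Hl.
rewrite -Hg ger0_norm; last exact: Gnn.
case: (pselect (is_vertex (C l) (vt (lift ord0 j)))) => Hv.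
  rewrite -S1 (bigD1 (lift ord0 j)) /=; last by apply/asboolP.
  by rewrite lerDl; apply: sumr_ge0 => k _; apply: Gnn.
by rewrite (Gzero l (C l) _ Hface Hv y Hl).
Qed.

Lemma g_bounded : exists BG, forall k x, `|gvec X m g x k| <= BG.
Proof.
have hc : forall k : gidx m, exists c, forall y, `|g (tag k) (tagged k) y| <= c.
  by move=> k; apply: g_bounded1.
have [c Hc] := choice hc.
exists (\sum_k `|c k|) => k x.
apply: le_trans (Hc k _) _; apply: le_trans (ler_norm _) _.
by rewrite (bigD1 k) //= lerDl sumr_ge0.
Qed.


Context (X0 : set (forall i : 'I_N, X i))
  (X0_bdd : lp_bounded_superlevel X d m g mu f X0)
  (eps : R) (eps_gt0 : 0 < eps)
  (Xd : nat -> set (forall i : 'I_N, X i))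
  (y0 : nat -> R) (y : nat -> gidx m -> R)
  (w : nat -> (forall i : 'I_N, X i) -> R)
  (xs : nat -> forall i : 'I_N, X i) (s : nat -> R)
  (Xs : nat -> set (forall i : 'I_N, X i))
  (run_init : Xd 0%N = X0)
  (run_step : forall r : nat,
      (forall k : nat, (k < r)%N -> ~ (y0 k - s k <= eps)) ->
      [/\ lp_optimal X d m g mu f (Xd r) (y0 r) (y r),
          dual_optimal X d m g mu f (Xd r) (w r),
          oracle_output X m g f (y r) (xs r) (s r) &
          ~ (y0 r - s r <= eps) ->
            [/\ finite_set (Xs r), Xs r (xs r) &
                Xd r.+1 = Xd r `|` Xs r]]).

Lemma obj_lb BF : (forall x, `|f x| <= BF) -> forall A y0' y',
  lp_optimal X d m g mu f A y0' y' -> - BF <= lsip_obj X d m g mu y0' y'.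
Proof.
move=> HF A y0' y' [_ Hopt].
have := Hopt (- BF) (fun _ => 0).
have -> : lsip_obj X d m g mu (- BF) (fun _ => 0) = - BF.
  by rewrite /lsip_obj big1 ?addr0 // => k _; rewrite mulr0.
apply => x _; rewrite big1 ?addr0; last by move=> k _; rewrite mulr0.
by have := HF x; rewrite ler_norml => /andP[].
Qed.

Lemma termination : exists r, y0 r - s r <= eps.
Proof.
apply: NNPP => Hno.
have Hall : forall r, ~ (y0 r - s r <= eps) by move=> r H; apply: Hno; exists r.
have RS := fun r => run_step r (fun k _ => Hall k).
have Hstep : forall r, Xd r.+1 = Xd r `|` Xs r /\ Xs r (xs r).
  by move=> r; case: (RS r) => _ _ _ /(_ (Hall r)) [].
have mono : forall r k, Xd r `<=` Xd (r + k).
  move=> r; elim=> [|k IH]; first by rewrite addn0.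
  rewrite addnS (proj1 (Hstep _)); apply: subset_trans IH _; exact: subsetUl.
have [BF HF] := f_bounded.
have [BG HG] := g_bounded.
have [M HM] := X0_bdd (- BF).
have ybd : forall r k, `|y r k| <= `|M|.
  move=> r k; case: (RS r) => Hlp _ _ _.
  have Hf0 : lsip_feasible X m g f X0 (y0 r) (y r).
    move=> x Hx; apply: (proj1 Hlp); rewrite -(add0n r); apply: mono.
    by rewrite run_init.
  have [_ H] := HM (y0 r) (y r) Hf0 (obj_lb _ HF _ _ _ Hlp).
  exact: le_trans (H k) (ler_norm _).
pose K := #|{: gidx m}|.
pose del := eps / (1 + K%:R * `|M|).
have den0 : 0 < 1 + K%:R * `|M|.
  by apply: ltr_pwDl => //; apply: mulr_ge0.
have del0 : 0 < del by apply: divr_gt0.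
pose p := fun n (o : option (gidx m)) =>
  match o with None => f (xs n) | Some k => gvec X m g (xs n) k end.
have pB : forall n o, `|p n o| <= `|BF| + `|BG|.
  move=> n [k|] /=.
    apply: le_trans (HG k _) _; apply: le_trans (ler_norm _) _; rewrite lerDr //.
  apply: le_trans (HF _) _; apply: le_trans (ler_norm _) _; rewrite lerDl //.
have [r [r' [rr' Hclose]]] := pigeon del0 pB.
case: (RS r') => [[Hfeas _] _ [_ Hs] _].
have Hx : Xd r' (xs r).
  have : Xd r.+1 `<=` Xd r' by rewrite -(subnKC rr'); apply: mono.
  by apply; rewrite (proj1 (Hstep r)); right; exact: (proj2 (Hstep r)).
have H1 := Hfeas _ Hx.
have H2 := Hall r'.
have Hf := Hclose None; rewrite /= in Hf.
have HD : \sum_k gvec X m g (xs r') k * y r' k - \sum_k gvec X m g (xs r) k * y r' k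
    <= K%:R * (del * `|M|).
  rewrite -sumrB.
  have -> : K%:R * (del * `|M|) = \sum_(k : gidx m) (del * `|M|).
    by rewrite sumr_const mulr_natl.
  apply: ler_sum => k _; rewrite -mulrBl.
  apply: le_trans (ler_norm _) _; rewrite normrM.
  apply: ler_pM; [exact: normr_ge0 | exact: normr_ge0 | | exact: ybd].
  have := Hclose (Some k); rewrite /= distrC => h; exact: ltW.
have Heps : del * (1 + K%:R * `|M|) = eps by rewrite mulrAC -mulrA mulfV ?gt_eqF // mulr1.
have Hfd : f (xs r) - f (xs r') < del by apply: le_lt_trans (ler_norm _) Hf.
apply: H2; rewrite Hs.
have : del + K%:R * (del * `|M|) = eps by rewrite -Heps; ring.
lra.
Qed.

End Main.

Section Dual.
Context (R : realType) (N : nat) (X : 'I_N -> pointedType)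
  (d : forall i : 'I_N, X i -> X i -> R)
  (mu : forall i : 'I_N, probability (borel (d i)) R)
  (f : (forall i : 'I_N, X i) -> R)
  (m : 'I_N -> nat) (g : forall i : 'I_N, 'I_(m i) -> X i -> R).

Let U := forall i : 'I_N, X i.
Let x0 : U := fun i => point.

Lemma fsum_seq (A : set U) (F : U -> R) : finite_set A ->
  \sum_(x \in A) F x = \sum_(x <- finmap.enum_fset (fset_set A)) F x.
Proof. by move=> fA; rewrite fsbig_finite. Qed.

Lemma mem_sA (A : set U) x : finite_set A ->
  (x \in finmap.enum_fset (fset_set A)) <-> A x.
Proof.
move=> fA; have := in_fset_set fA x => E.
split => H.
  by apply: set_mem; rewrite -E; exact: H.
by have := mem_set H; rewrite -E.
Qed.


Lemma sum_index (sA : seq U) (F : U -> R) (lam : nat -> R) : uniq sA ->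
  \sum_(x <- sA) F x * lam (index x sA) =
  \sum_(k < size sA) F (nth x0 sA k) * lam k.
Proof.
move=> u; rewrite (big_nth x0) big_mkord; apply: eq_bigr => k _.
by rewrite index_uniq.
Qed.

Lemma weak_dual (A : set U) (y0' : R) (y' : gidx m -> R) (w' : U -> R) :
  finite_set A -> lsip_feasible X m g f A y0' y' ->
  dual_feasible X d m g mu A w' ->
  lsip_obj X d m g mu y0' y' <= \sum_(x \in A) f x * w' x.
Proof.
move=> fA Hf [Hw0 Hw1 Hwg].
rewrite fsum_seq // in Hw1; rewrite fsum_seq //.
set sA := finmap.enum_fset (fset_set A) in Hw1 *.
have Hle : \sum_(x <- sA) (y0' + \sum_k gvec X m g x k * y' k) * w' x
    <= \sum_(x <- sA) f x * w' x.
  rewrite big_seq_cond [leRHS]big_seq_cond; apply: ler_sum => x.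
  rewrite andbT => /(mem_sA _ _ fA) Ax.
  by apply: ler_wpM2r; [exact: Hw0 | exact: Hf].
apply: le_trans Hle; rewrite /lsip_obj.
rewrite [leRHS](eq_bigr _ (fun x _ => mulrDl _ _ _)).
rewrite big_split /= -mulr_sumr Hw1 mulr1 lerD2l.
rewrite [leRHS](eq_bigr _ (fun x _ => mulr_suml _ _ _ _)).
rewrite exchange_big /=; apply: ler_sum => k _.
have := Hwg k; rewrite fsum_seq // => <-.
rewrite mulr_suml; apply: ler_sum => x _.
by rewrite mulrAC.
Qed.


Lemma strong_dual (A : set U) (y0' : R) (y' : gidx m -> R) (w' : U -> R) :
  finite_set A -> lp_optimal X d m g mu f A y0' y' ->
  dual_optimal X d m g mu f A w' ->
  \sum_(x \in A) f x * w' x <= lsip_obj X d m g mu y0' y'.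
Proof.
move=> fA [Hf Hopt] [Hwf Hwopt].
set sA := finmap.enum_fset (fset_set A).
have u : uniq sA := finmap.fset_uniq _.
pose n := size sA.
pose a := fun k (o : option (gidx m)) =>
  match o with None => 1 | Some kk => gvec X m g (nth x0 sA k) kk end.
pose b := fun k => f (nth x0 sA k).
pose c := fun o : option (gidx m) =>
  match o with None => 1 | Some kk => gbar X d m g mu kk end.
pose z0 := fun o : option (gidx m) =>
  match o with None => y0' | Some kk => y' kk end.
have da : forall k z, dotf (a k) z =
    z None + \sum_kk gvec X m g (nth x0 sA k) kk * z (Some kk).
  by move=> k z; rewrite /dotf big_optionE mul1r.
have dc : forall z, dotf c z =
    lsip_obj X d m g mu (z None) (fun kk => z (Some kk)).
  by move=> z; rewrite /dotf big_optionE mul1r.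
have nth_in : forall k, (k < n)%N -> A (nth x0 sA k).
  by move=> k kn; apply/(mem_sA _ _ fA); exact: mem_nth.
have Hz0 : forall k, (k < n)%N -> dotf (a k) z0 <= b k.
  by move=> k kn; rewrite da; exact: Hf _ (nth_in k kn).
have Hopt' : forall z, (forall k, (k < n)%N -> dotf (a k) z <= b k) ->
    dotf c z <= lsip_obj X d m g mu y0' y'.
  move=> z Hz; rewrite dc; apply: Hopt => x Ax.
  have xin : x \in sA by apply/(mem_sA _ _ fA).
  have := Hz (index x sA); rewrite index_mem => /(_ xin).
  by rewrite da /b nth_index.
have [lam [lge0 [Hc Hb]]] := lp_duality Hz0 Hopt'.
pose w'' := fun x => lam (index x sA).
have Hwf'' : dual_feasible X d m g mu A w''.
  split.
  - by move=> x _; exact: lge0.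
  - rewrite fsum_seq // (eq_bigr (fun x => 1 * w'' x)); last by move=> x _; rewrite mul1r.
    rewrite sum_index //; transitivity (c None) => //; rewrite Hc.
    by apply: eq_bigr => k _; rewrite mulrC.
  - move=> kk; rewrite fsum_seq // sum_index //.
    transitivity (c (Some kk)) => //; rewrite Hc.
    by apply: eq_bigr => k _; rewrite mulrC.
have := Hwopt _ Hwf''.
rewrite [X in _ <= X -> _]fsum_seq // sum_index // => H.
apply: le_trans H _; apply: le_trans _ Hb.
by rewrite le_eqVlt; apply/orP; left; apply/eqP; apply: eq_bigr => k _; rewrite mulrC.
Qed.

Lemma dual_value (A : set U) (y0' : R) (y' : gidx m -> R) (w' : U -> R) :
  finite_set A -> lp_optimal X d m g mu f A y0' y' ->
  dual_optimal X d m g mu f A w' ->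
  \sum_(x \in A) f x * w' x = lsip_obj X d m g mu y0' y'.
Proof.
move=> fA Hlp Hdual; apply/eqP; rewrite eq_le strong_dual //=.
exact: weak_dual (proj1 Hlp) (proj1 Hdual).
Qed.

End Dual.

Section Meas2.
Context (R : realType) (N : nat) (X : 'I_N -> pointedType)
  (d : forall i : 'I_N, X i -> X i -> R)
  (d_metric : forall i, is_metric (d i))
  (X_compact : forall i, mcompact (d i))
  (mu : forall i : 'I_N, probability (borel (d i)) R)
  (f : (forall i : 'I_N, X i) -> R) (Lf : R) (Lf_gt0 : 0 < Lf)
  (f_lip : forall x y, `|f x - f y| <= Lf * dsum X d x y)
  (m : 'I_N -> nat) (g : forall i : 'I_N, 'I_(m i) -> X i -> R)
  (g_int : forall i (j : 'I_(m i)),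
      (mu i).-integrable setT (fun x => (g i j x)%:E))
  (BSS : BSS_a X d m g mu \/ BSS_b X d m g mu).

Lemma mopen_proj i (U : set (X i)) : mopen (d i) U ->
  mopen (dsum X d) ((fun x : forall i, X i => x i) @^-1` U).
Proof.
move=> oU x /= Ux; have [r r0 Hr] := oU _ Ux; exists r => // y.
rewrite /mball /= => dxy; apply: Hr; rewrite /mball /=.
exact: le_lt_trans (@d_le_dsum _ _ _ _ d_metric i x y) dxy.
Qed.

Lemma mopen_f a : mopen (dsum X d) (f @^-1` `]a, +oo[).
Proof.
move=> x; rewrite /= in_itv /= andbT => ax.
exists ((f x - a) / Lf); first by apply: divr_gt0 => //; rewrite subr_gt0.
move=> y; rewrite /mball /= in_itv /= andbT => dxy.
have := f_lip x y; have := ler_norm (f x - f y).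
have : Lf * dsum X d x y < f x - a.
  by rewrite mulrC -ltr_pdivlMr.
lra.
Qed.

Lemma proj_meas i : measurable_fun [set: prodX X d]
  (fun x : prodX X d => (x i : borel (d i))).
Proof.
have := @measurability _ _ (prodX X d) (borel (d i)) setT (fun x : prodX X d => (x i : borel (d i))) (mopen (d i)).
apply => //.
move=> _ [B oB <-]; apply: sub_sigma_algebra; rewrite setTI.
exact: mopen_proj.
Qed.

Lemma f_meas : measurable_fun [set: prodX X d] f.
Proof.
have := @measurability _ _ (prodX X d) R setT f _ (RGenOInfty.measurableE R).
apply => //.
move=> _ [_ [a ->] <-]; apply: sub_sigma_algebra; rewrite setTI.
exact: mopen_f.
Qed.

Lemma g_meas i j : measurable_fun [set: borel (d i)] (g i j).
Proof.
by have /integrableP[/measurable_EFinP] := g_int i j.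
Qed.


Lemma bounded_of (T : Type) (h : T -> R) B : (forall x, `|h x| <= B) ->
  [bounded h x | x in [set: T]].
Proof.
move=> hB; exists B; split; first exact: num_real.
by move=> M BM x _; apply: le_trans (hB x) (ltW BM).
Qed.


Lemma marg_int (P : set (prodX X d) -> \bar R) (hP : is_probability P) :
  Gamma X d m g mu P -> forall k,
  (\int[mkmeas _ _ _ _ hP]_x (gvec X m g x k)%:E = (gbar X d m g mu k)%:E)%E.
Proof.
move=> [_ Hmarg] [i j]; rewrite /gvec /gbar /=.
pose Pm := mkmeas _ _ _ _ hP.
have PmT : (Pm setT < +oo)%E by rewrite /Pm mkmeasT // ltry.
have mf : measurable_fun [set: borel (d i)] (fun z => (g i j z)%:E).
  by apply/measurable_EFinP; exact: g_meas.
have [c Hc] := g_bounded1 _ _ _ _ d_metric X_compact _ _ _ BSS _ j.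
have intf : Pm.-integrable ((fun x : prodX X d => (x i : borel (d i))) @^-1` setT)
    ((fun z => (g i j z)%:E) \o (fun x : prodX X d => (x i : borel (d i)))).
  rewrite preimage_setT.
  apply: measurable_bounded_integrable => //.
    exact: (measurableT_comp (g_meas i j) (proj_meas i)).
  by apply: bounded_of => x; exact: Hc.
have := @integral_pushforward _ _ _ _ R (fun x : prodX X d => (x i : borel (d i)))
  (proj_meas i) Pm setT (fun z => (g i j z)%:E) mf intf measurableT.
rewrite preimage_setT => <-.
rewrite (@eq_raw_integral _ _ _ setT (pushforward P (fun x : prodX X d => (x i : borel (d i))))).
  rewrite Hmarg /Rintegral fineK //; exact: integrable_fin_num.
move=> B mB _; rewrite /pushforward /Pm; apply: mkmeasE.
by have := proj_meas i measurableT _ mB; rewrite setTI.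
Qed.

Lemma gamma_lb (P : set (prodX X d) -> \bar R) y0' y' :
  Gamma X d m g mu P -> lsip_feasible X m g f setT y0' y' ->
  ((lsip_obj X d m g mu y0' y')%:E <= \int[P]_x (f x)%:E)%E.
Proof.
move=> [hP Hmarg] Hfeas.
pose Pm := mkmeas _ _ _ _ hP.
have PmE : forall A, measurable A -> P A = Pm A.
  by move=> A mA; rewrite /Pm mkmeasE.
have PmT : (Pm setT < +oo)%E by rewrite /Pm mkmeasT // ltry.
rewrite (@eq_raw_integral _ _ _ setT Pm P) //; last by move=> A mA _; apply: PmE.
have [BF HF] := f_bounded _ _ _ _ d_metric X_compact _ _ Lf_gt0 f_lip.
have intf : Pm.-integrable setT (EFin \o f).
  apply: measurable_bounded_integrable => //; first exact: f_meas.
  exact: bounded_of HF.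
have intg : forall k : gidx m, Pm.-integrable setT
    (EFin \o (fun x => gvec X m g x k)).
  move=> k; have [c Hc] := g_bounded1 _ _ _ _ d_metric X_compact _ _ _ BSS _ (tagged k).
  apply: measurable_bounded_integrable => //.
    exact: (measurableT_comp (g_meas (tag k) (tagged k)) (proj_meas (tag k))).
  by apply: bounded_of => x; exact: Hc.
have hE : (fun x : prodX X d => ((y0' + \sum_k gvec X m g x k * y' k)%:E)) =
    (fun x => ((y0')%:E + \sum_k ((y' k)%:E * (gvec X m g x k)%:E)))%E.
  apply/funext => x; rewrite EFinD -sumEFin; congr (_ + _)%E.
  by apply: eq_bigr => k _; rewrite EFinM muleC.
have intc : Pm.-integrable setT (fun _ => (y0')%:E).
  apply: (measurable_bounded_integrable (f := cst y0')) => //.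
  by apply: (@bounded_of _ _ `|y0'|) => x; exact: lexx.
have intS : Pm.-integrable setT
    (fun x => \sum_k ((y' k)%:E * (gvec X m g x k)%:E))%E.
  apply: integrable_sum => //= k _; apply: integrableZl => //; exact: intg.
have inth : Pm.-integrable setT
    (fun x : prodX X d => ((y0' + \sum_k gvec X m g x k * y' k)%:E)).
  by rewrite hE; apply: integrableD.
have Hval : (\int[Pm]_x ((y0' + \sum_k gvec X m g x k * y' k)%:E))%E =
    (lsip_obj X d m g mu y0' y')%:E.
  have Pm1 : (Pm setT = 1)%E by apply: mkmeasT.
  rewrite hE integralD // integral_cst //=.
  set Q := mkmeas _ _ _ _ hP _.
  have -> : Q = 1%E by exact: Pm1.
  rewrite mule1 integral_sum //; last first.
    by move=> k; apply: integrableZl => //; exact: intg.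
  rewrite /lsip_obj EFinD -sumEFin; congr (_ + _)%E.
  apply: eq_bigr => k _; rewrite integralZl //; last exact: intg.
  rewrite EFinM muleC; congr (_ * _)%E.
  exact (marg_int P hP (conj hP Hmarg) k).
rewrite -Hval; apply: le_integral => // x _.
by rewrite lee_fin; exact: Hfeas.
Qed.


End Meas2.

Theorem proposition4p8 (R : realType) (N : nat) (X : 'I_N -> pointedType)
  (d : forall i : 'I_N, X i -> X i -> R)
  (d_metric : forall i, is_metric (d i))
  (X_compact : forall i, mcompact (d i))
  (mu : forall i : 'I_N, probability (borel (d i)) R)
  (f : (forall i : 'I_N, X i) -> R) (Lf : R) (Lf_gt0 : 0 < Lf)
  (f_lip : forall x y, `|f x - f y| <= Lf * dsum X d x y)
  (m : 'I_N -> nat) (g : forall i : 'I_N, 'I_(m i) -> X i -> R)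
  (g_int : forall i (j : 'I_(m i)),
      (mu i).-integrable setT (fun x => (g i j x)%:E))
  (BSS : BSS_a X d m g mu \/ BSS_b X d m g mu)
  (X0 : set (forall i : 'I_N, X i)) (X0_fin : finite_set X0)
  (X0_bdd : lp_bounded_superlevel X d m g mu f X0)
  (eps : R) (eps_gt0 : 0 < eps)
  (* a run of Algorithm 1: LP/dual optimizers, oracle outputs, added sets *)
  (Xd : nat -> set (forall i : 'I_N, X i))
  (y0 : nat -> R) (y : nat -> gidx m -> R)
  (w : nat -> (forall i : 'I_N, X i) -> R)
  (xs : nat -> forall i : 'I_N, X i) (s : nat -> R)
  (Xs : nat -> set (forall i : 'I_N, X i))
  (run_init : Xd 0%N = X0)
  (run_step : forall r : nat,
      (forall k : nat, (k < r)%N -> ~ (y0 k - s k <= eps)) ->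
      [/\ lp_optimal X d m g mu f (Xd r) (y0 r) (y r),
          dual_optimal X d m g mu f (Xd r) (w r),
          oracle_output X m g f (y r) (xs r) (s r) &
          ~ (y0 r - s r <= eps) ->
            [/\ finite_set (Xs r), Xs r (xs r) &
                Xd r.+1 = Xd r `|` Xs r]]) :
  exists r : nat,
    [/\ (* (i) termination at iteration r *)
        y0 r - s r <= eps,
        forall k : nat, (k < r)%N -> ~ (y0 k - s k <= eps) &
        let aUB := lsip_obj X d m g mu (y0 r) (y r) in
        let aLB := aUB - y0 r + s r in
        let hatmu := discrete_measure X d (Xd r) (w r) in
        [/\ (* (ii) *)
            (aLB%:E <= lsip_value X d m g mu f <= aUB%:E)%E /\ aUB - aLB <= eps,
            (* (iii) *)
            (lsip_feasible X m g f setT (s r) (y r) /\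
             (lsip_value X d m g mu f
                <= (lsip_obj X d m g mu (s r) (y r) + eps)%:E)%E) /\
            lsip_obj X d m g mu (s r) (y r) = aLB &
            (* (iv) *)
            (Gamma X d m g mu hatmu /\
             (\int[hatmu]_x (f x)%:E <= mmot_value X d m g mu f + eps%:E)%E) /\
            (\int[hatmu]_x (f x)%:E)%E = aUB%:E]].

Proof.
have [r0 Hr0] := termination R N X d d_metric X_compact mu f Lf Lf_gt0 f_lip m g BSS
  X0 X0_bdd eps eps_gt0 Xd y0 y w xs s Xs run_init run_step.
pose P := fun r => `[< y0 r - s r <= eps >].
have exP : exists r, P r by exists r0; apply/asboolP.
case: (ex_minnP exP) => r /asboolP Hterm Hmin'.
have Hmin : forall k, (k < r)%N -> ~ (y0 k - s k <= eps).
  move=> k kr Hk; have := Hmin' k (asboolT Hk); rewrite leqNgt kr; done.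
have fin : forall k, (k <= r)%N -> finite_set (Xd k).
  elim=> [|k IH] kr; first by rewrite run_init.
  have Hk : forall j, (j < k)%N -> ~ (y0 j - s j <= eps).
    by move=> j jk; apply: Hmin; exact: ltn_trans jk kr.
  case: (run_step k Hk) => _ _ _ /(_ (Hmin k kr)) [fXs _ ->].
  rewrite finite_setU; split => //; apply: IH; exact: ltnW.
have fA := fin r (leqnn r).
case: (run_step r Hmin) => Hlp Hdual Hor _.
exists r; split => //.
move=> aUB aLB hatmu.
have Hval := dual_value R N X d mu f m g (Xd r) (y0 r) (y r) (w r) fA Hlp Hdual.
have Hfeas : lsip_feasible X m g f setT (s r) (y r).
  by move=> x _; case: Hor => H1 H2; have := H1 x; rewrite -H2; lra.
have aLBE : lsip_obj X d m g mu (s r) (y r) = aLB.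
  by rewrite /aLB /aUB /lsip_obj; ring.
have Hub : (lsip_value X d m g mu f <= aUB%:E)%E.
  apply: ge_ereal_sup => z [y0' [y' [Hf ->]]]; rewrite lee_fin.
  by apply: (proj2 Hlp) => x _; exact: Hf.
have Hlb : (aLB%:E <= lsip_value X d m g mu f)%E.
  by rewrite -aLBE; apply: ereal_sup_ubound; exists (s r), (y r).
split.
- split; first by rewrite Hlb Hub.
  by rewrite /aLB; lra.
- split => //; split => //.
  apply: le_trans Hub _; rewrite lee_fin aLBE /aLB; lra.
pose x0 : forall i, X i := fun i => point.
set sA := finmap.enum_fset (fset_set (Xd r)).
have [[Hw0 Hw1 Hwg] _] := Hdual.
have Hwabs : forall x, x \in sA -> `|w r x| = w r x.
  by move=> x /(mem_sA N X _ _ fA) Ax; rewrite ger0_norm //; exact: Hw0.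
have H1 : hatmu = dmeas _ (prodX X d) R _ x0 (fun x => x : prodX X d) (w r) sA.
  apply/funext => B; rewrite dmeasE /hatmu /discrete_measure fsbig_finite //=.
  rewrite -/sA big_seq [RHS]big_seq; apply: eq_bigr => x xin.
  by rewrite Hwabs.
have Hint : (\int[hatmu]_x (f x)%:E)%E = aUB%:E.
  rewrite H1.
  have := integral_dmeas _ (prodX X d) R _ x0 (fun x => x : prodX X d) (w r) sA f
    (f_meas R N X d f Lf Lf_gt0 f_lip).
  move=> ->; congr EFin; rewrite /aUB -Hval fsum_seq // -/sA.
  rewrite big_seq [RHS]big_seq; apply: eq_bigr => x xin.
  by rewrite Hwabs // mulrC.
have Hprob : is_probability hatmu.
  rewrite H1; split.
  - exact: measure0.
  - by move=> A _; exact: measure_ge0.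
  - exact: measure_semi_sigma_additive.
  - rewrite dmeasE; under eq_bigr do rewrite diracT mule1.
    rewrite sumEFin; congr EFin; rewrite -Hw1 fsum_seq // -/sA.
    by rewrite big_seq [RHS]big_seq; apply: eq_bigr => x xin; rewrite Hwabs.
have Hmarg : forall i (j : 'I_(m i)),
    (\int[pushforward hatmu (fun x : prodX X d => (x i : borel (d i)))]_z
        (g i j z)%:E = \int[mu i]_z (g i j z)%:E)%E.
  move=> i j.
  have Hpf : pushforward hatmu (fun x : prodX X d => (x i : borel (d i))) =
      dmeas _ (borel (d i)) R _ x0 (fun x => (x i : borel (d i))) (w r) sA.
    apply/funext => B; rewrite /pushforward H1 !dmeasE; apply: eq_bigr => x _.
    by rewrite !diracE.
  rewrite Hpf.
  have := integral_dmeas _ (borel (d i)) R _ x0 (fun x => (x i : borel (d i)))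
    (w r) sA (g i j) (g_meas R N X d mu m g g_int i j).
  move=> ->.
  rewrite -[RHS]fineK; last exact: integrable_fin_num.
  congr EFin.
  rewrite -[fine _]/(gbar X d m g mu (existT _ i j)) -Hwg fsum_seq // -/sA.
  rewrite big_seq [RHS]big_seq; apply: eq_bigr => x xin.
  by rewrite Hwabs // mulrC.
split; last exact: Hint.
split; first by split.
rewrite Hint.
have Hlow : lbound [set z | exists P, Gamma X d m g mu P /\
      z = (\int[P]_x (f x)%:E)%E] ((aUB - eps)%:E).
  move=> z [P0 [HG ->]].
  apply: le_trans (gamma_lb R N X d d_metric X_compact mu f Lf Lf_gt0 f_lip m g g_int BSS
    P0 (s r) (y r) HG Hfeas); rewrite lee_fin aLBE /aLB; lra.
have := le_ereal_inf_tmp Hlow.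
rewrite /mmot_value; case: (ereal_inf _) => [q| |] //= H.
  by rewrite lee_fin in H; rewrite -EFinD lee_fin; lra.
by rewrite leey.
Qed.
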